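(* Let $\mathcal{F}_2=\mathcal{F}_2(L^*,\{d_j^*\}_{j=0}^{L^*+1},s^*,V_{max},\hat{\mathbf G},\kappa)$ be a function class whose sparse ReLU networks have $L^*=O(\log^{\xi^*}n)$ layers, first-layer width $d_1^*\le n^{\alpha^*}$, output dimension $d^*_{L^*+1}=1$, other widths satisfying $m_0+m\le\min_{j\in\{1,\dots,L^*\}}d_j^*\le\max_{j\in\{1,\dots,L^*\}}d_j^*=O(n^{\xi^*})$, and sparsity $s^*\asymp d_1^*\kappa+n^{\alpha^*}\log^{\xi^*}n$, where $0<\alpha^*<1$ and $\xi^*>1$ are constants. Let $N_{\delta,2}$ denote the cardinality of a minimal $\delta$-covering set of $\mathcal{F}_2$ with respect to the $\ell_\infty$ (sup) norm. Then, for $\delta=\frac1n$, $$\log N_{\frac1n,2}\le C_1|\mathcal{A}|\big(n^{\alpha^*}(\log n)^{\xi^*}+d_1^*\kappa\big)(\log n)^{1+\xi^*}$$ for some constant $C_1$.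
   Context: States are $(x,z)$ with $x\in\mathbb{R}^{m_0}$, $z\in\mathbb{R}^m$; $\mathcal{A}$ is a finite action set; $\kappa\le m$; $n$ is the sample size. $\hat{\mathbf G}=\hat U\hat\Sigma\hat U^T=\sum_{k=1}^m\hat\lambda_k\hat U_k\hat U_k^T$ is an estimated covariance matrix of $z$, and $\hat v_\kappa=\begin{pmatrix}I_\kappa&0_{\kappa\times(m-\kappa)}\end{pmatrix}\hat\Sigma^{-1/2}\hat U^Tz$ are the first $\kappa$ principal component scores. $\mathcal{F}_{SReLU}(L,\{d_j\}_{j=0}^{L+1},s,V_{max})$ is the set of $f(x)=W_Lg_{L-1}\circ\cdots\circ g_0(x)$, $g_j(x)=\max(W_jx+v_j,0)$, $W_j\in\mathbb{R}^{d_{j+1}\times d_j}$, all entries of all $W_j,v_j$ in $[-1,1]$, at most $s$ nonzero parameters in total, and $\|f\|_\infty\le V_{max}$. $\mathcal{F}_2(L,\{d_j\},s,V_{max},\hat{\mathbf G},\kappa)$ is the set of functions $(x,z,a)\mapsto f_0(x,\hat v_\kappa,a)$ where, for each $a\in\mathcal{A}$, $f_0(\cdot,a)\in\mathcal{F}_{SReLU}(L,\{d_j\},s,V_{max})$ with input dimension $m_0+\kappa$.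
   Formalization: The sup norm defining $N_{\frac1n,2}$ runs only over states (x,z) in a fixed set where all |xᵢ| and all coordinates of $\hat v_\kappa$ are at most a constant B, and covering functions need not lie in $\mathcal{F}_2$. Apart from conventions, each condition added here is assumed in the paper as well or is needed for the statement above to hold. *)

(* Defs.v *)
From HB Require Import structures.
From mathcomp Require Import all_boot all_order all_algebra.
From mathcomp Require Import all_classical all_reals all_analysis.
Set Implicit Arguments. Unset Strict Implicit. Unset Printing Implicit Defensive.
Import Order.TTheory GRing.Theory Num.Theory.
Local Open Scope ring_scope.

Section Defs.
Variable R : realType.

(** Vectors of the (varying) layer widths are encoded
    as [nat -> R], only the first [d j] coordinates being meaningful.
    [W j i k] is entry (i,k) of the weight matrix W_j in R^{d_{j+1} x d_j},
    [v j i] is entry i of the shift vector v_j in R^{d_{j+1}}. *)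

Fixpoint hid (d : nat -> nat) (W : nat -> nat -> nat -> R) (v : nat -> nat -> R)
  (j : nat) (y : nat -> R) : nat -> R :=
  match j with
  | 0 => y
  | j'.+1 => fun i => Num.max (\sum_(k < d j') W j' i k * hid d W v j' y k + v j' i) 0
  end.

(* f(y) = W_L g_{L-1} o ... o g_0 (y), with output dimension d_{L+1} = 1 *)
Definition net_eval (L : nat) (d : nat -> nat) (W : nat -> nat -> nat -> R)
  (v : nat -> nat -> R) (y : nat -> R) : R :=
  \sum_(k < d L) W L 0%N k * hid d W v L y k.

Definition nparams (L : nat) (d : nat -> nat) (W : nat -> nat -> nat -> R)
  (v : nat -> nat -> R) : nat :=
  (\sum_(j < L.+1) \sum_(i < d j.+1) \sum_(k < d j) nat_of_bool (W j i k != 0%R)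
   + \sum_(j < L) \sum_(i < d j.+1) nat_of_bool (v j i != 0%R))%N.

(* F_SReLU(L, {d_j}, s, Vmax) : functions of the input y in R^{d_0}
   (encoded as nat -> R; net_eval only reads coordinates < d 0). *)
Definition F_SReLU (L : nat) (d : nat -> nat) (s : nat) (Vmax : R)
  : set ((nat -> R) -> R) :=
  [set f | exists (W : nat -> nat -> nat -> R) (v : nat -> nat -> R),
     (forall j i k, `|W j i k| <= 1) /\ (forall j i, `|v j i| <= 1) /\
     (nparams L d W v <= s)%N /\
     (forall y, f y = net_eval L d W v y) /\
     (forall y, `|f y| <= Vmax)].

Definition rv2seq (n : nat) (r : 'rV[R]_n) : nat -> R :=
  fun i => match (insub i : option 'I_n) with Some k => r 0 k | None => 0 end.

(* first kappa principal component scores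
   v_kappa = (I_kappa 0) Sigma^{-1/2} U^T z, with Sigma = diag(lam) *)
Definition vhat (m kappa : nat) (hk : (kappa <= m)%N) (U : 'M[R]_m)
  (lam : 'I_m -> R) (z : 'rV[R]_m) : 'rV[R]_kappa :=
  \row_(k < kappa) ((Num.sqrt (lam (widen_ord hk k)))^-1 *
                    (z *m U) 0 (widen_ord hk k)).

Definition F2 (m0 m kappa : nat) (hk : (kappa <= m)%N) (A : finType)
  (L : nat) (d : nat -> nat) (s : nat) (Vmax : R) (U : 'M[R]_m) (lam : 'I_m -> R)
  : set ('rV[R]_m0 * 'rV[R]_m * A -> R) :=
  [set f | exists f0 : A -> (nat -> R) -> R,
     (forall a, F_SReLU L d s Vmax (f0 a)) /\
     (forall x z a, f (x, z, a) = f0 a (rv2seq (row_mx x (vhat hk U lam z))))].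

Definition has_cover (X : Type) (D : set X) (F : set (X -> R)) (delta : R) (k : nat) :=
  exists g : 'I_k -> X -> R,
    forall f, F f -> exists i, forall p, D p -> `|f p - g i p| <= delta.

(* cardinality of a minimal delta-cover (0 if no finite cover exists) *)
Definition covering_number (X : Type) (D : set X) (F : set (X -> R)) (delta : R) : nat :=
  match pselect (exists k, `[< has_cover D F delta k >]) with
  | left h => @ex_minn (fun k => `[< has_cover D F delta k >]) h
  | right _ => 0%N
  end.

End Defs.

(* Main.v *)
Require Import Defs.
From HB Require Import structures.
From mathcomp Require Import all_boot all_order all_algebra.
From mathcomp Require Import all_classical all_reals all_analysis.
From mathcomp Require Import ring lra zify.
Import Order.TTheory GRing.Theory Num.Theory.
Local Open Scope ring_scope.
Local Open Scope classical_set_scope.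

Section Err.
Variable R : realType.

Lemma maxr0_norm (a : R) : `|Num.max a 0| <= `|a|.
Proof.
rewrite /Num.max; case: ifP => h; first by rewrite normr0.
by [].
Qed.
Lemma maxr0_lip (a b : R) : `|Num.max a 0 - Num.max b 0| <= `|a - b|.
Proof.
rewrite /Num.max; case: ifP => ha; case: ifP => hb.
- by rewrite subrr normr0.
- move/negbT: hb; rewrite -leNgt => hb.
  rewrite sub0r normrN (ger0_norm hb) -normrN opprB ger0_norm; lra.
- rewrite subr0; move/negbT: ha; rewrite -leNgt => ha.
  rewrite !ger0_norm; lra.
- done.
Qed.

Lemma sum_norm_bound n (F : 'I_n -> R) (c : R) :
  (forall k : 'I_n, `|F k| <= c) -> `|\sum_(k < n) F k| <= n%:R * c.
Proof.
move=> h; apply: le_trans (ler_norm_sum _ _ _) _.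
apply: le_trans (ler_sum _ (fun k _ => h k)) _.
by rewrite sumr_const card_ord mulr_natl.
Qed.

Variables (L : nat) (d : nat -> nat) (W W' : nat -> nat -> nat -> R)
  (v v' : nat -> nat -> R) (y : nat -> R) (K Bp eps : R).
Hypothesis hK : forall j, (j <= L)%N -> (d j)%:R + 1 <= K.
Hypothesis hB : 1 <= Bp.
Hypothesis he : 0 <= eps.
Hypothesis hW : forall j i k, (j <= L)%N -> (i < d j.+1)%N -> (k < d j)%N ->
  [/\ `|W j i k| <= 1, `|W' j i k| <= 1 & `|W j i k - W' j i k| <= eps].
Hypothesis hv : forall j i, (j < L)%N -> (i < d j.+1)%N ->
  [/\ `|v j i| <= 1, `|v' j i| <= 1 & `|v j i - v' j i| <= eps].
Hypothesis hy : forall k, (k < d 0)%N -> `|y k| <= Bp.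

Lemma K1 : 1 <= K.
Proof. have := @hK 0%N (leq0n L); have : 0 <= (d 0)%:R :> R by []. lra. Qed.

Lemma hid_err j : (j <= L)%N -> forall i, (i < d j)%N ->
  [/\ `|hid d W v j y i| <= K ^+ j * Bp, `|hid d W' v' j y i| <= K ^+ j * Bp
   & `|hid d W v j y i - hid d W' v' j y i| <= j%:R * eps * (K ^+ j * Bp)].
Proof.
elim: j => [_ i hi|j IH hj i hi] /=.
  by rewrite subrr normr0 !mul0r expr0 mul1r; split => //; exact: hy.
have hjL : (j <= L)%N by apply: ltnW.
have hjl : (j < L)%N by [].
set X := K ^+ j * Bp.
have X1 : 1 <= X by rewrite /X -[1]mulr1; apply: ler_pM => //; [ exact: exprn_ege1 K1].
have hKj := hK _ hjL.
have hKX : K ^+ j.+1 * Bp = K * X by rewrite /X exprS mulrA.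
rewrite hKX.
have [hv1 hv2 hv3] := hv _ _ hjl hi.
have ha : forall (WW : nat -> nat -> nat -> R) (vv : nat -> nat -> R),
   (forall k, (k < d j)%N -> `|WW j i k| <= 1) -> `|vv j i| <= 1 ->
   (forall k, (k < d j)%N -> `|hid d WW vv j y k| <= X) ->
   `|\sum_(k < d j) WW j i k * hid d WW vv j y k + vv j i| <= K * X.
  move=> WW vv hw hvv hh.
  apply: le_trans (ler_normD _ _) _.
  have : `|\sum_(k < d j) WW j i k * hid d WW vv j y k| <= (d j)%:R * X.
    apply: sum_norm_bound => k; rewrite normrM -[X]mul1r.
    apply: ler_pM => //; [exact: hw | exact: hh].
  have : 0 <= (d j)%:R :> R by []. nra.
split.
- apply: le_trans (maxr0_norm _) _; apply: ha => //.
  + by move=> k hk; case: (hW _ _ _ hjL hi hk).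
  + by move=> k hk; case: (IH hjL k hk).
- apply: le_trans (maxr0_norm _) _; apply: ha => //.
  + by move=> k hk; case: (hW _ _ _ hjL hi hk).
  + by move=> k hk; case: (IH hjL k hk).
apply: le_trans (maxr0_lip _ _) _.
rewrite opprD addrACA -sumrB.
apply: le_trans (ler_normD _ _) _.
have : `|\sum_(k < d j) (W j i k * hid d W v j y k - W' j i k * hid d W' v' j y k)|
   <= (d j)%:R * (j%:R * eps * X + eps * X).
  apply: sum_norm_bound => k.
  have [w1 w2 w3] := hW _ _ _ hjL hi (ltn_ord k).
  have [h1 h2 h3] := IH hjL k (ltn_ord k).
  have -> : W j i k * hid d W v j y k - W' j i k * hid d W' v' j y k =
    W j i k * (hid d W v j y k - hid d W' v' j y k) + (W j i k - W' j i k) * hid d W' v' j y k by ring.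
  apply: le_trans (ler_normD _ _) _; rewrite !normrM.
  apply: lerD.
    rewrite -[_ * eps * X]mul1r; apply: ler_pM => //.
  by apply: ler_pM.
have hd0 : 0 <= (d j)%:R :> R by [].
have hj0 : 0 <= j%:R :> R by [].
rewrite -natr1 => hs.
clearbody X.
have hP : 0 <= (j%:R + 1) * eps * X.
  by apply: mulr_ge0; [apply: mulr_ge0 => //; lra | lra].
have h1 : (j%:R + 1) * eps * X * ((d j)%:R + 1) <= (j%:R + 1) * eps * X * K.
  by apply: ler_wpM2l.
have h2 : eps <= eps * X by rewrite -{1}[eps]mulr1; apply: ler_wpM2l.
have h3 : eps * X <= (j%:R + 1) * eps * X.
  have hEX : 0 <= eps * X by apply: mulr_ge0 => //; exact: le_trans ler01 X1.
  rewrite -mulrA mulrDl mul1r; apply: ler_wpDl => //; exact: mulr_ge0.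
have -> : (j%:R + 1) * eps * (K * X) = (j%:R + 1) * eps * X * K by ring.
have e1 : (d j)%:R * (j%:R * eps * X + eps * X) + (j%:R + 1) * eps * X =
   (j%:R + 1) * eps * X * ((d j)%:R + 1) by ring.
lra.
Qed.

Lemma net_err : (0 < d L.+1)%N ->
  `|net_eval L d W v y - net_eval L d W' v' y| <= L.+1%:R * eps * (K ^+ L.+1 * Bp).
Proof.
move=> hdL.
rewrite /net_eval -sumrB.
set X := K ^+ L * Bp.
have hKX : K ^+ L.+1 * Bp = K * X by rewrite /X exprS mulrA.
rewrite hKX.
have X1 : 1 <= X by rewrite /X -[1]mulr1; apply: ler_pM => //; [ exact: exprn_ege1 K1].
have hKj := hK _ (leqnn L).
have : `|\sum_(k < d L) (W L 0%N k * hid d W v L y k - W' L 0%N k * hid d W' v' L y k)|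
   <= (d L)%:R * (L%:R * eps * X + eps * X).
  apply: sum_norm_bound => k.
  have [w1 w2 w3] := hW _ _ _ (leqnn L) hdL (ltn_ord k).
  have [h1 h2 h3] := @hid_err L (leqnn L) k (ltn_ord k).
  have -> : W L 0%N k * hid d W v L y k - W' L 0%N k * hid d W' v' L y k =
    W L 0%N k * (hid d W v L y k - hid d W' v' L y k) + (W L 0%N k - W' L 0%N k) * hid d W' v' L y k by ring.
  apply: le_trans (ler_normD _ _) _; rewrite !normrM.
  apply: lerD.
    rewrite -[_ * eps * X]mul1r; apply: ler_pM => //.
  by apply: ler_pM.
have : 0 <= (d L)%:R :> R by [].
have : 0 <= L%:R :> R by [].
rewrite -natr1 => hd0 hj0 hs.
clearbody X.
have hP : 0 <= (L%:R + 1) * eps * X.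
  by apply: mulr_ge0; [apply: mulr_ge0 => //; lra | exact: le_trans ler01 X1].
have h1 : (L%:R + 1) * eps * X * (d L)%:R <= (L%:R + 1) * eps * X * K.
  apply: ler_wpM2l => //; lra.
have -> : (L%:R + 1) * eps * (K * X) = (L%:R + 1) * eps * X * K by ring.
have e1 : (d L)%:R * (L%:R * eps * X + eps * X) =
   (L%:R + 1) * eps * X * (d L)%:R by ring.
lra.
Qed.
End Err.
Lemma sum_pairE (I J : finType) (F : I * J -> nat) :
  (\sum_(p : I * J) F p = \sum_(i : I) \sum_(j : J) F (i, j))%N.
Proof. by rewrite pair_bigA; apply: eq_bigr => -[]. Qed.

Lemma sum_widen_if n m (G : nat -> nat) : (n <= m)%N ->
  (\sum_(i < m) (if (i < n)%N then G i else 0%N) = \sum_(i < n) G i)%N.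
Proof. by move=> h; rewrite (big_ord_widen m G h) [RHS]big_mkcond. Qed.

Lemma nat_andb (a b : bool) : nat_of_bool (a && b) = if a then nat_of_bool b else 0%N.
Proof. by case: a. Qed.

Section Code.
Variable R : realType.
Variables (L Wm N s : nat).

Definition Pos := (bool * 'I_L.+1 * 'I_Wm.+1 * 'I_Wm.+1)%type.
Definition Grid := 'I_(N.*2).+1.
Definition Code := {ffun 'I_s -> option (Pos * Grid)}.

Definition gval (g : Grid) : R := (g%:R - N%:R) / N%:R.
Definition quant (w : R) : Grid := inord (absz (Num.floor (w * N%:R) + N%:Z)).

Definition look (c : Code) (p : Pos) : R :=
  match [pick t | oapp (fun qg => qg.1 == p) false (c t)] with
  | Some t => oapp (fun qg => gval qg.2) 0 (c t)
  | None => 0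
  end.

Definition decW (c : Code) (j i k : nat) : R :=
  if [&& (j <= L)%N, (i <= Wm)%N & (k <= Wm)%N]
  then look c (true, inord j, inord i, inord k) else 0.
Definition decv (c : Code) (j i : nat) : R :=
  if (j <= L)%N && (i <= Wm)%N then look c (false, inord j, inord i, ord0) else 0.

Definition mkcode (sq : seq Pos) (h : Pos -> Grid) : Code :=
  [ffun t : 'I_s => nth None [seq Some (p, h p) | p <- sq] t].

Lemma look_mkcode sq h p : (size sq <= s)%N ->
  look (mkcode sq h) p = if p \in sq then gval (h p) else 0.
Proof.
move=> hs; rewrite /look.
case: pickP => [t|hn].
  rewrite /mkcode ffunE.
  case: (ltnP t (size sq)) => ht; last by rewrite nth_default // size_map.
  rewrite (nth_map p) //= => /eqP eq.
  have hp : p \in sq by rewrite -eq mem_nth.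
  by rewrite hp eq.
case hp: (p \in sq) => //.
have hi : (index p sq < s)%N by apply: leq_trans hs; rewrite index_mem.
have := hn (Ordinal hi); rewrite /mkcode ffunE /= (nth_map p) ?index_mem //=.
by rewrite nth_index // eqxx.
Qed.

Hypothesis hN : (0 < N)%N.

Lemma gval_bound g : `|gval g| <= 1.
Proof.
have hg : (g <= N.*2)%N by rewrite -ltnS.
have hNr : 0 < N%:R :> R by rewrite ltr0n.
rewrite /gval normrM normfV (gtr0_norm hNr) ler_pdivrMr // mul1r.
rewrite ler_norml; apply/andP; split.
  have : 0 <= g%:R :> R by []. lra.
have : g%:R <= (N.*2)%:R :> R by rewrite ler_nat.
have e : ((N.*2)%:R : R) = N%:R + N%:R by rewrite -addnn natrD.
lra.
Qed.

Lemma quant_err w : `|w| <= 1 -> `|w - gval (quant w)| <= N%:R^-1.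
Proof.
move=> hw.
have hNr : 0 < N%:R :> R by rewrite ltr0n.
set f := Num.floor (w * N%:R).
have /andP[fl fu] := floor_itv (w * N%:R); rewrite -/f in fl fu.
have hwl : - N%:R <= w * N%:R.
  have : - 1 <= w by move: hw; rewrite ler_norml => /andP[].
  nra.
have hwu : w * N%:R <= N%:R.
  have : w <= 1 by move: hw; rewrite ler_norml => /andP[].
  nra.
have f1 : (- N%:Z <= f)%R.
  by rewrite /f floor_ge_int mulrNz -pmulrn.
have f2 : (f <= N%:Z)%R.
  have : f%:~R <= (N%:Z)%:~R :> R by rewrite -pmulrn; exact: le_trans fl hwu.
  by rewrite ler_int.
have ea : ((absz (f + N%:Z))%:Z = f + N%:Z)%R by lia.
have hq : (quant w : nat) = absz (f + N%:Z).
  by rewrite /quant inordK //; lia.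
have hg : (quant w)%:R = (f + N%:Z)%:~R :> R.
  by rewrite hq pmulrn ea.
rewrite /gval hg rmorphD /= addrK.
rewrite -{1}(mulfK (lt0r_neq0 hNr) w) -mulrBl normrM normfV (gtr0_norm hNr).
rewrite ler_pdivrMr // mulVf ?lt0r_neq0 //.
rewrite ger0_norm; lra.
Qed.


Variable d : nat -> nat.
Hypothesis hd : forall j, (j <= L.+1)%N -> (d j <= Wm)%N.
Variables (W : nat -> nat -> nat -> R) (v : nat -> nat -> R).

Definition relp (p : Pos) : bool :=
  let: (b, j, i, k) := p in
  if b then [&& (i < d j.+1)%N, (k < d j)%N & W j i k != 0]
  else [&& (j < L)%N, (i < d j.+1)%N, (k == 0%N :> nat) & v j i != 0].

Definition pval (p : Pos) : R :=
  let: (b, j, i, k) := p in if b then W j i k else v j i.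

Lemma card_relp : #|finset relp| = nparams L d W v.
Proof.
rewrite -sum1_card big_mkcond /=.
transitivity (\sum_(p : Pos) nat_of_bool (relp p))%N.
  by apply: eq_bigr => p _; rewrite inE; case: relp.
rewrite !sum_pairE big_bool /= /nparams; congr (_ + _)%N.
- apply: eq_bigr => j _.
  have hj : (j <= L)%N by rewrite -ltnS.
  rewrite -(@sum_widen_if (d j.+1) Wm.+1 (fun i => \sum_(k < d j) nat_of_bool (W j i k != 0))); last first.
    by apply: leq_trans (hd _ _) _.
  apply: eq_bigr => i _.
  case: ifP => hi; last by rewrite big1 // => k _; rewrite hi.
  rewrite -(@sum_widen_if (d j) Wm.+1 (fun k => nat_of_bool (W j i k != 0))); last first.
    by apply: leq_trans (hd _ _) _; apply: leqW.
  by apply: eq_bigr => k _; case: (k < d j)%N.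
- rewrite -(@sum_widen_if L L.+1 (fun j => \sum_(i < d j.+1) nat_of_bool (v j i != 0))) //.
  apply: eq_bigr => j _.
  case: ifP => hj; last first.
    by rewrite big1 // => i _; rewrite big1 // => k _; rewrite hj.
  rewrite -(@sum_widen_if (d j.+1) Wm.+1 (fun i => nat_of_bool (v j i != 0))); last first.
    by apply: leq_trans (hd _ _) _.
  apply: eq_bigr => i _.
  rewrite big_ord_recl /= big1 ?addn0; first by case: (i < d j.+1)%N.
  by move=> k _; rewrite andbF.
Qed.

Lemma encode : (forall j i k, `|W j i k| <= 1) -> (forall j i, `|v j i| <= 1) ->
  (nparams L d W v <= s)%N ->
  exists c : Code,
  (forall j i k, (j <= L)%N -> (i < d j.+1)%N -> (k < d j)%N ->
     `|decW c j i k| <= 1 /\ `|W j i k - decW c j i k| <= N%:R^-1) /\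
  (forall j i, (j < L)%N -> (i < d j.+1)%N ->
     `|decv c j i| <= 1 /\ `|v j i - decv c j i| <= N%:R^-1).
Proof.
move=> hW hv hs.
have hsz : (size (enum (finset relp)) <= s)%N by rewrite -cardE card_relp.
have hN0 : 0 <= N%:R^-1 :> R by rewrite invr_ge0.
exists (mkcode (enum (finset relp)) (fun p => quant (pval p))); split.
- move=> j i k hj hi hk.
  have hi' : (i <= Wm)%N by apply: ltnW (leq_trans hi (hd _ _)).
  have hk' : (k <= Wm)%N by apply: ltnW (leq_trans hk (hd _ _)); apply: leqW.
  have e1 : ((inord j : 'I_L.+1) : nat) = j by rewrite inordK.
  have e2 : ((inord i : 'I_Wm.+1) : nat) = i by rewrite inordK.
  have e3 : ((inord k : 'I_Wm.+1) : nat) = k by rewrite inordK.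
  rewrite /decW hj hi' hk' /= look_mkcode // mem_enum inE /= e1 e2 e3 hi hk /=.
  case: (W j i k =P 0) => [-> | /eqP hne] /=.
    by rewrite normr0 subr0 normr0.
  split; first exact: gval_bound.
  exact: quant_err.
- move=> j i hj hi.
  have hj' : (j <= L)%N by apply: ltnW.
  have hi' : (i <= Wm)%N by apply: ltnW (leq_trans hi (hd _ _)).
  have e1 : ((inord j : 'I_L.+1) : nat) = j by rewrite inordK.
  have e2 : ((inord i : 'I_Wm.+1) : nat) = i by rewrite inordK.
  rewrite /decv hj' hi' /= look_mkcode // mem_enum inE /= e1 e2 hi hj /=.
  case: (v j i =P 0) => [-> | /eqP hne] /=.
    by rewrite normr0 subr0 normr0.
  split; first exact: gval_bound.
  exact: quant_err.
Qed.

End Code.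
Lemma ln_le_id (R : realType) (x : R) : 0 < x -> ln x <= x.
Proof.
move=> hx; have := @le_ln1Dx R (x - 1).
have -> : 1 + (x - 1) = x by ring.
move=> h.
have := h ltac:(lra); lra.
Qed.

Lemma lnQ_bound (R : realType) (L Wm Bn n : nat) (cL xi c : R) :
 (1 <= n)%N -> (1 <= Bn)%N -> 0 <= cL -> 1 <= xi -> 0 < c ->
 1 <= ln (n%:R : R) -> L%:R <= cL * (ln (n%:R : R)) `^ xi ->
 (Wm.+1)%:R <= c * (n%:R : R) `^ xi ->
 ln ((2 * L.+1 * Wm.+1 * Wm.+1 * ((L.+1 * Wm.+1 ^ L.+1 * Bn * n).*2).+1).+1)%:R
  <= (7 + 2 * cL + (cL + 3) * (c + xi) + Bn%:R + 1) * (ln (n%:R : R) * (ln (n%:R : R)) `^ xi).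
Proof.
move=> hn hB hcL hxi hc hl hL hK.
have [l El] : exists l, ln (n%:R : R) = l by eexists.
rewrite El in hl hL *.
have hll : l <= l `^ xi by apply: le1r_powR.
have [lam Elam] : exists lam, l `^ xi = lam by eexists.
rewrite Elam in hL hll *.
have hlam1 : 1 <= lam := le_trans hl hll.
have hll2 : lam <= l * lam.
  by rewrite -{1}[lam]mul1r; apply: ler_wpM2r => //; exact: le_trans ler01 hlam1.
have hll3 : l <= l * lam.
  by rewrite -{1}[l]mulr1; apply: ler_wpM2l => //; exact: le_trans ler01 hl.
set N := (L.+1 * Wm.+1 ^ L.+1 * Bn * n)%N.
have hN : (1 <= N)%N by rewrite /N; rewrite !muln_gt0 expn_gt0 /=; lia.
have hQ : ((2 * L.+1 * Wm.+1 * Wm.+1 * (N.*2).+1).+1 <=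
   7 * (L.+1 * L.+1) * Wm.+1 ^ (L + 3) * Bn * n)%N.
  have -> : (7 * (L.+1 * L.+1) * Wm.+1 ^ (L + 3) * Bn * n = 7 * (L.+1 * Wm.+1 * Wm.+1) * N)%N.
    have -> : (L + 3 = L.+1 + 2)%N by lia.
    by rewrite /N expnD; ring.
  have : (1 <= L.+1 * Wm.+1 * Wm.+1)%N by rewrite !muln_gt0.
  move: hN; set a := (L.+1 * Wm.+1 * Wm.+1)%N. move=> hN ha.
  have -> : (2 * L.+1 * Wm.+1 * Wm.+1 = 2 * a)%N by rewrite /a; ring.
  clearbody a N. rewrite -muln2. nia.
have hQpos : (0 < (2 * L.+1 * Wm.+1 * Wm.+1 * (N.*2).+1).+1)%N by [].
have h1 := hQ; rewrite -(ler_nat R) in h1.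
apply: le_trans (_ : ln ((7 * (L.+1 * L.+1) * Wm.+1 ^ (L + 3) * Bn * n)%:R) <= _).
  by rewrite ler_ln ?posrE ?ltr0n ?(leq_trans hQpos hQ).
have lnMp : forall x y : R, 0 < x -> 0 < y -> ln (x * y) = ln x + ln y.
  by move=> x y hx hy; rewrite lnM ?posrE.
have hn0 : 0 < n%:R :> R by rewrite ltr0n.
have hB0 : 0 < Bn%:R :> R by rewrite ltr0n.
have ha0 : 0 < (L.+1)%:R :> R by rewrite ltr0n.
have hK0 : 0 < (Wm.+1)%:R :> R by rewrite ltr0n.
rewrite !natrM natrX.
rewrite lnMp ?mulr_gt0 ?exprn_gt0 ?ltr0n //.
rewrite lnMp ?mulr_gt0 ?exprn_gt0 ?ltr0n //.
rewrite lnMp ?mulr_gt0 ?exprn_gt0 ?ltr0n //.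
rewrite lnMp ?mulr_gt0 ?exprn_gt0 ?ltr0n //.
rewrite lnMp ?mulr_gt0 ?exprn_gt0 ?ltr0n //.
rewrite lnXn // El.
have l7 : ln (7%:R : R) <= 7 by apply: ln_le_id; rewrite ltr0n.
have la : ln ((L.+1)%:R : R) <= cL * lam.
  apply: le_trans hL; have := @le_ln1Dx R (L%:R).
  rewrite -natr1 addrC; apply; apply: lt_le_trans (_ : -1 < 0) _ => //.
have lb : ln (Bn%:R : R) <= Bn%:R by apply: ln_le_id.
have lK0 : 0 <= ln ((Wm.+1)%:R : R) by apply: ln_ge0; rewrite ler1n.
have hnx : 0 < (n%:R : R) `^ xi by rewrite powR_gt0.
have lK : ln ((Wm.+1)%:R : R) <= c + xi * l.
  apply: le_trans (_ : ln (c * (n%:R : R) `^ xi) <= _).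
    by rewrite ler_ln ?posrE ?mulr_gt0.
  rewrite lnMp // ln_powR El; have := @ln_le_id _ c hc; lra.
have hL3 : (L + 3)%:R <= cL * lam + 3 :> R by rewrite natrD; lra.
have T3 : (L + 3)%:R * ln ((Wm.+1)%:R : R) <= (cL + 3) * (c + xi) * (l * lam).
  apply: le_trans (_ : (cL * lam + 3) * (c + xi * l) <= _).
    by apply: ler_pM => //.
  have -> : (cL + 3) * (c + xi) * (l * lam) = ((cL + 3) * lam) * ((c + xi) * l) by ring.
  apply: ler_pM.
  - apply: addr_ge0 => //; apply: mulr_ge0 => //; exact: le_trans ler01 hlam1.
  - apply: addr_ge0; [exact: ltW | apply: mulr_ge0 => //; [lra | exact: le_trans ler01 hl]].
  - have : 3 <= 3 * lam by rewrite -{1}[3]mulr1; apply: ler_wpM2l.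
    have : cL * lam = cL * lam by []. lra.
  - have : c <= c * l by rewrite -{1}[c]mulr1; apply: ler_wpM2l => //; exact: ltW.
    lra.
rewrite -[ln _ *+ (L + 3)]mulr_natl.
have hLL : 1 <= l * lam by apply: le_trans hll3; exact: hl.
have t1 : 7 <= 7 * (l * lam) by rewrite -{1}[7]mulr1; apply: ler_wpM2l.
have t2 : cL * lam <= cL * (l * lam) by apply: ler_wpM2l.
have t4 : Bn%:R <= Bn%:R * (l * lam) :> R by rewrite -{1}[Bn%:R]mulr1; apply: ler_wpM2l.
move: T3 t1 t2 t4 hll3 la l7 lb.
have -> : (7 + 2 * cL + (cL + 3) * (c + xi) + Bn%:R + 1) * (l * lam) =
  7 * (l * lam) + 2 * (cL * (l * lam)) + (cL + 3) * (c + xi) * (l * lam) + Bn%:R * (l * lam) + l * lam by ring.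
move: (l * lam) (cL * (l * lam)) ((cL + 3) * (c + xi) * (l * lam)) (Bn%:R * (l * lam)) => LL A1 A2 A3.
move: ((L + 3)%:R * ln (R:=R) (Wm.+1)%:R) => A4.
move=> *; lra.
Qed.
Lemma aux_range (x y : nat) : (x < y.+2)%N -> x != 0%N -> x != y.+1 -> (1 <= x <= y)%N.
Proof. lia. Qed.

Theorem proposition2 (R : realType) (m0 m kappa : nat) (hk : (kappa <= m)%N)
  (A : finType) (Vmax : R) (alpha xi : R)
  (halpha : 0 < alpha < 1) (hxi : 1 < xi) (hV : 0 < Vmax)
  (S : set ('rV[R]_m0 * 'rV[R]_m)) (B : R)
  (cL cW cs1 cs2 : R) (n0 : nat)
  (hc : [/\ 0 < cL, 0 < cW, 0 < cs1 & 0 < cs2])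
  (L : nat -> nat) (d : nat -> nat -> nat) (s : nat -> nat)
  (G U : nat -> 'M[R]_m) (lam : nat -> 'I_m -> R)
  (hL : forall n, (n0 <= n)%N ->
     (1 <= L n)%N /\ (L n)%:R <= cL * (ln n%:R) `^ xi)
  (hd0 : forall n, (n0 <= n)%N -> d n 0%N = (m0 + kappa)%N)
  (hdout : forall n, (n0 <= n)%N -> d n (L n).+1 = 1%N)
  (hd1 : forall n, (n0 <= n)%N -> (d n 1%N)%:R <= n%:R `^ alpha)
  (hdj : forall n j, (n0 <= n)%N -> (1 <= j <= L n)%N ->
     (m0 + m <= d n j)%N /\ (d n j)%:R <= cW * n%:R `^ xi)
  (hs : forall n, (n0 <= n)%N ->
     cs1 * ((d n 1%N * kappa)%:R + n%:R `^ alpha * (ln n%:R) `^ xi) <= (s n)%:R /\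
     (s n)%:R <= cs2 * ((d n 1%N * kappa)%:R + n%:R `^ alpha * (ln n%:R) `^ xi))
  (hG : forall n, (n0 <= n)%N ->
     [/\ (U n)^T *m U n = 1%:M,
         G n = U n *m diag_mx (\row_k lam n k) *m (U n)^T,
         forall k, 0 < lam n k
       & forall k l : 'I_m, (k <= l)%N -> lam n l <= lam n k])
  (hS : forall n, (n0 <= n)%N -> forall x z, S (x, z) ->
     (forall i, `|x 0 i| <= B) /\
     (forall k, `|vhat hk (U n) (lam n) z 0 k| <= B)) :
  exists (C1 : R) (N0 : nat), forall n, (N0 <= n)%N ->
    let F := @F2 R m0 m kappa hk A (L n) (d n) (s n) Vmax (U n) (lam n) in
    let D := [set p : 'rV[R]_m0 * 'rV[R]_m * A | S (p.1.1, p.1.2)] in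
    (exists k, has_cover D F (n%:R^-1) k) /\
    ln (covering_number D F (n%:R^-1))%:R <=
      C1 * #|A|%:R * (n%:R `^ alpha * (ln n%:R) `^ xi + (d n 1%N * kappa)%:R)
         * (ln n%:R) `^ (1 + xi).
Proof.
case: hc => hcL hcW hcs1 hcs2.
have [Bn [hBn1 hBn]] : exists Bn : nat, (1 <= Bn)%N /\ B <= Bn%:R.
  exists (Num.trunc `|B|).+1; split => //.
  apply: le_trans (ler_norm B) _; exact: ltW (truncnS_gt _).
have [Ne hNe] : exists Ne : nat, expR 1 <= Ne%:R :> R.
  exists (Num.trunc (expR (1 : R))).+1; exact: ltW (truncnS_gt _).
pose c : R := (m0 + kappa + 2)%:R + cW.
exists (cs2 * (7 + 2 * cL + (cL + 3) * (c + xi) + Bn%:R + 1)), (maxn n0 (maxn Ne 1)).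
move=> n hn F D.
have hn0 : (n0 <= n)%N by lia.
have hn1 : (1 <= n)%N by lia.
have hnNe : (Ne <= n)%N by lia.
have [hL1 hLb] := hL n hn0.
have hd0n := hd0 n hn0.
have hdoutn := hdout n hn0.
have [hs1 hs2] := hs n hn0.
pose Ln := L n. pose dn := d n. pose sn := s n.
pose Wm := (\max_(j < Ln.+2) dn j)%N.
have hdW : forall j, (j <= Ln.+1)%N -> (dn j <= Wm)%N.
  move=> j hj; exact: (@leq_bigmax _ (fun j : 'I_Ln.+2 => dn j) (Ordinal (hj : (j < Ln.+2)%N))).
pose N := (Ln.+1 * Wm.+1 ^ Ln.+1 * Bn * n)%N.
have hNpos : (0 < N)%N by rewrite /N !muln_gt0 expn_gt0 /= hBn1 hn1.
pose CT := {ffun A -> Code Ln Wm N sn}.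
pose k := #|CT|.
pose g : 'I_k -> 'rV[R]_m0 * 'rV[R]_m * A -> R := fun i p =>
  net_eval Ln dn (decW R Ln Wm N sn (enum_val i p.2)) (decv R Ln Wm N sn (enum_val i p.2))
    (rv2seq (row_mx p.1.1 (vhat hk (U n) (lam n) p.1.2))).
pose K : R := (Wm.+1)%:R.
pose Bp : R := Bn%:R.
pose eps : R := N%:R^-1.
have hK : forall j, (j <= Ln)%N -> (dn j)%:R + 1 <= K.
  move=> j hj; rewrite natr1 ler_nat ltnS; apply: hdW; exact: leqW.
have hB : 1 <= Bp by rewrite ler1n.
have he : 0 <= eps by rewrite invr_ge0.
have hdL : (0 < dn Ln.+1)%N by rewrite /dn /Ln hdoutn.
have herr : (Ln.+1)%:R * eps * (K ^+ Ln.+1 * Bp) = n%:R^-1.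
  rewrite /eps /N /K /Bp !natrM natrX; field.
  apply/and4P; split.
  - by rewrite pnatr_eq0 -lt0n.
  - by rewrite pnatr_eq0 -lt0n.
  - by rewrite expf_neq0 // pnatr_eq0.
  - by rewrite addrC natr1 pnatr_eq0.
have good : forall a : A, forall f0 : (nat -> R) -> R, F_SReLU Ln dn sn Vmax f0 ->
   exists c : Code Ln Wm N sn, `[< forall y : nat -> R, (forall kk, `|y kk| <= Bp) ->
      `|f0 y - net_eval Ln dn (decW R Ln Wm N sn c) (decv R Ln Wm N sn c) y| <= n%:R^-1 >].
  move=> a f0 [W [v [hW [hv [hnp [hev _]]]]]].
  have [cc [hW' hv']] := @encode R Ln Wm N sn hNpos dn hdW W v hW hv hnp.
  exists cc; apply/asboolP => y hy; rewrite hev -herr.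
  apply: net_err => //.
  - move=> j i kk hj hi hkk; have [h1 h2] := hW' j i kk hj hi hkk; split => //.
  - move=> j i hj hi; have [h1 h2] := hv' j i hj hi; split => //.
have hcov : has_cover D F n%:R^-1 k.
  exists g => f [f0 [hf0 hf]].
  pose cf : CT := [ffun a => xchoose (good a (f0 a) (hf0 a))].
  exists (enum_rank cf) => -[[x z] a] HS.
  rewrite hf /g /= enum_rankK ffunE.
  have := xchooseP (good a (f0 a) (hf0 a)); move/asboolP; apply.
  move=> kk; rewrite /rv2seq; case: insubP => [k' _ _|_]; last first.
    by rewrite normr0; exact: le_trans ler01 hB.
  have [hx hz] := hS n hn0 x z HS.
  move: k' => /= k'; rewrite -[k'](@fintype.splitK m0 kappa); case: (fintype.split k') => i /=; rewrite ?row_mxEl ?row_mxEr;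
    apply: le_trans hBn; [exact: hx | exact: hz].
split; first by exists k.
have hcn : (covering_number D F n%:R^-1 <= k)%N.
  rewrite /covering_number; case: pselect => [h|//].
  case: ex_minnP => mm _ hmin; apply: hmin; exact/asboolP.
pose Q := (2 * Ln.+1 * Wm.+1 * Wm.+1 * (N.*2).+1).+1.
have hkQ : k = ((Q ^ sn) ^ #|A|)%N.
  by rewrite /k /CT card_ffun /Code card_ffun card_option !card_prod card_bool !card_ord.
have hk1 : (0 < k)%N by rewrite hkQ !expn_gt0.
have hlnk : ln (covering_number D F n%:R^-1)%:R <= ln (k%:R : R).
  move: hcn; case: (covering_number D F n%:R^-1) => [|cv] hcv.
    by rewrite ln0 // ln_ge0 // ler1n.
  by rewrite ler_ln ?posrE ?ltr0n // ler_nat.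
have hlk : ln (k%:R : R) = ln (Q%:R : R) * sn%:R * #|A|%:R.
  rewrite hkQ !natrX lnXn ?exprn_gt0 ?ltr0n // lnXn ?ltr0n //.
  by rewrite !mulr_natr.
have hl1 : 1 <= ln (n%:R : R).
  apply: le_trans (_ : ln (expR 1) <= _); first by rewrite expRK.
  rewrite ler_ln ?posrE ?expR_gt0 ?ltr0n //.
  by apply: le_trans hNe _; rewrite ler_nat.
have hpx : 1 <= (n%:R : R) `^ xi.
  apply: le_trans (_ : n%:R <= _); first by rewrite ler1n.
  by apply: le1r_powR; [rewrite ler1n | exact: ltW].
have hWm : (Wm.+1)%:R <= c * (n%:R : R) `^ xi.
  have [j0 ej0] := @bigop.eq_bigmax _ (fun j : 'I_Ln.+2 => dn j) ltac:(by rewrite card_ord).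
  have hj0 : (dn j0)%:R <= (m0 + kappa + 1)%:R + cW * (n%:R : R) `^ xi.
    have hcw0 : 0 <= cW * (n%:R : R) `^ xi by apply: mulr_ge0; [exact: ltW | exact: powR_ge0].
    case: (eqVneq (j0 : nat) 0%N) => [e0|n0'].
      rewrite e0 /dn hd0n; apply: ler_wpDr => //; rewrite ler_nat; exact: leq_addr.
    case: (eqVneq (j0 : nat) Ln.+1) => [e1|n1'].
      rewrite e1 /dn hdoutn; apply: ler_wpDr => //; rewrite ler_nat; exact: leq_addl.
    have hj : (1 <= j0 <= L n)%N.
      exact: aux_range (ltn_ord j0) n0' n1'.
    have [_ h] := hdj n j0 hn0 hj.
    apply: le_trans h _; apply: ler_wpDl => //.
  rewrite /Wm ej0 -natr1.
  have e2 : ((m0 + kappa + 1)%:R + 1 = (m0 + kappa + 2)%:R :> R) by rewrite !natrD; ring.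
  have h3 : (m0 + kappa + 2)%:R <= (m0 + kappa + 2)%:R * (n%:R : R) `^ xi.
    by rewrite -{1}[(m0 + kappa + 2)%:R]mulr1; apply: ler_wpM2l.
  rewrite /c mulrDl; lra.
have hc0 : 0 < c by rewrite /c; apply: addr_gt0 => //; rewrite ltr0n addn2.
have hQb := @lnQ_bound R Ln Wm Bn n cL xi c hn1 hBn1 (ltW hcL) (ltW hxi) hc0 hl1 hLb hWm.
rewrite powRD; last first.
  by apply/implyP => _; apply: lt0r_neq0; apply: lt_le_trans hl1.
rewrite powRr1; last by apply: le_trans hl1.
apply: le_trans hlnk _; rewrite hlk.
have hQ1 : 0 <= ln (Q%:R : R) by apply: ln_ge0; rewrite ler1n.
set T := n%:R `^ alpha * ln (n%:R : R) `^ xi + (d n 1 * kappa)%:R.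
have hsn : sn%:R <= cs2 * T by rewrite /T addrC.
set C' := 7 + 2 * cL + (cL + 3) * (c + xi) + Bn%:R + 1.
set LL := ln (n%:R : R) * ln (n%:R : R) `^ xi.
have hQ' : ln (Q%:R : R) <= C' * LL by exact: hQb.
have h1 : ln (Q%:R : R) * sn%:R <= (C' * LL) * (cs2 * T) by apply: ler_pM.
have -> : cs2 * C' * #|A|%:R * T * LL = (C' * LL) * (cs2 * T) * #|A|%:R by ring.
by apply: ler_wpM2r.
Qed.
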